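(* Let $P$ be a finite poset. For every $f\in\mathcal O(P)$ we have $\alpha_2(f)\in\mathcal C(P)$, $\alpha_3(\alpha_2(f))\in\tilde{\mathcal O}(P)$, and $$\rho_{\mathcal P}(f)=\alpha_1\bigl(\alpha_3(\alpha_2(f))\bigr),$$ i.e. $\rho_{\mathcal P}=\alpha_1\circ\alpha_3\circ\alpha_2$ on $\mathcal O(P)$.
   Context: For a finite poset $P$, let $\widehat P=P\cup\{\hat0,\hat1\}$ with $\hat0<x<\hat1$ for all $x\in P$, and write $y\lessdot x$ ($x$ covers $y$) when $y<x$ and no $z$ satisfies $y<z<x$. The order polytope $\mathcal O(P)$ is the set of order-preserving maps $f:P\to[0,1]$; each such $f$ is extended to $\hat f$ on $\widehat P$ by $\hat f(\hat0)=0$, $\hat f(\hat1)=1$. For $x\in P$ the piecewise-linear toggle $\tau_x:\mathcal O(P)\to\mathcal O(P)$ leaves $f(y)$ unchanged for $y\neq x$ and sets $(\tau_xf)(x)=\max\{\hat f(y):y\in\widehat P,\ y\lessdot x\}+\min\{\hat f(y):y\in\widehat P,\ y\gtrdot x\}-f(x)$. Piecewise-linear rowmotion is $\rho_{\mathcal P}=\tau_{x_1}\circ\cdots\circ\tau_{x_p}$ for any linear extension $x_1,\dots,x_p$ of $P$. The chain polytope $\mathcal C(P)$ is the set of maps $g:P\to[0,1]$ with $\sum_{x\in C}g(x)\le 1$ for every chain $C\subseteq P$. $\tilde{\mathcal O}(P)$ is the set of order-reversing maps $P\to[0,1]$. Define: $(\alpha_1 h)(x)=1-h(x)$ for $h\in\tilde{\mathcal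 O}(P)$; $(\alpha_2 f)(x)=\min\{\hat f(x)-\hat f(y): y\in\widehat P,\ y\lessdot x\}$ for $f\in\mathcal O(P)$; and $(\alpha_3 g)(x)=\max\{g(y_1)+\cdots+g(y_k): x=y_1\lessdot y_2\lessdot\cdots\lessdot y_k\lessdot\hat1,\ y_1,\dots,y_k\in P\}$ for $g\in\mathcal C(P)$. *)

(* Defs.v *)
From HB Require Import structures.
From mathcomp Require Import all_boot all_order all_algebra.
Set Implicit Arguments. Unset Strict Implicit. Unset Printing Implicit Defensive.
Import Order.TTheory GRing.Theory Num.Theory.
Local Open Scope ring_scope.

Section PL.
Variables (d : Order.disp_t) (P : finPOrderType d) (R : realFieldType).

(* The extended poset \hat P := P ∪ {0^,1^}, encoded as option (option P):
   None = \hat 0, Some None = \hat 1, Some (Some x) = x. *)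
Definition hat := option (option P).
Definition hbot : hat := None.
Definition htop : hat := Some None.
Definition helt (x : P) : hat := Some (Some x).

Definition hlt (a b : hat) : bool :=
  match a, b with
  | None, Some _ => true
  | Some (Some x), Some (Some y) => (x < y)%O
  | Some (Some _), Some None => true
  | _, _ => false
  end.

Definition hcovers (a b : hat) : bool :=
  hlt a b && [forall z : hat, ~~ (hlt a z && hlt z b)].

Definition fhat (f : P -> R) (a : hat) : R :=
  match a with None => 0 | Some None => 1 | Some (Some x) => f x end.

(* max / min of a finite list of reals (only used on nonempty lists;
   the value on the empty list is irrelevant) *)
Definition maxs (s : seq R) : R :=
  if s is x :: t then foldr Num.max x t else 0.
Definition mins (s : seq R) : R :=
  if s is x :: t then foldr Num.min x t else 0.

Definition in_order_polytope (f : P -> R) : Prop :=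
  (forall x, 0 <= f x <= 1) /\ (forall x y : P, (x <= y)%O -> f x <= f y).

Definition is_chain (C : {set P}) : bool :=
  [forall x in C, forall y in C, (x <= y)%O || (y <= x)%O].

Definition in_chain_polytope (g : P -> R) : Prop :=
  (forall x, 0 <= g x <= 1) /\
  (forall C : {set P}, is_chain C -> \sum_(x in C) g x <= 1).

Definition in_rev_order_polytope (h : P -> R) : Prop :=
  (forall x, 0 <= h x <= 1) /\ (forall x y : P, (x <= y)%O -> h y <= h x).

Definition toggle (x : P) (f : P -> R) : P -> R :=
  fun y => if y == x then
      maxs [seq fhat f a | a <- enum {: hat} & hcovers a (helt x)]
    + mins [seq fhat f a | a <- enum {: hat} & hcovers (helt x) a]
    - f x
  else f y.

Definition linear_extension (l : seq P) : Prop :=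
  [/\ uniq l, (forall x, x \in l) &
      (forall x y : P, (x < y)%O -> index x l < index y l)%N].

Definition pl_rowmotion (l : seq P) (f : P -> R) : P -> R :=
  foldr toggle f l.

Definition alpha1 (h : P -> R) : P -> R := fun x => 1 - h x.

Definition alpha2 (f : P -> R) : P -> R := fun x =>
  mins [seq fhat f (helt x) - fhat f a | a <- enum {: hat} & hcovers a (helt x)].

Definition short_seqs : seq (seq P) :=
  flatten [seq [seq tval t | t : n.-tuple P] | n <- iota 0 #|P|.+1].

(* saturated chains x = y_1 ⋖ y_2 ⋖ ... ⋖ y_k ⋖ 1^ are x :: r with r in
   short_seqs (any such chain has k <= #|P| since it is strictly increasing) *)
Definition sat_chain_to_top (x : P) (r : seq P) : bool :=
  path (fun y z => hcovers (helt y) (helt z)) x r && hcovers (helt (last x r)) htop.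

Definition alpha3 (g : P -> R) : P -> R := fun x =>
  maxs [seq \sum_(y <- x :: r) g y | r <- short_seqs & sat_chain_to_top x r].

End PL.

(* Main.v *)
Require Import Defs.
From HB Require Import structures.
From mathcomp Require Import all_boot all_order all_algebra.
From mathcomp Require Import lra.
Import Order.TTheory GRing.Theory Num.Theory.
Local Open Scope ring_scope.
Set Implicit Arguments. Unset Strict Implicit. Unset Printing Implicit Defensive.

Section Lists.
Variable R : realFieldType.

Lemma maxs_ub (s : seq R) z : z \in s -> z <= maxs s.
Proof.
case: s => [//|x t] /=; elim: t z => [|y t IH] z /=.
  by rewrite inE => /eqP ->.
rewrite le_max !inE => /or3P [/eqP ->|/eqP ->|zt].
- by rewrite (IH _) ?orbT // inE eqxx.
- by rewrite lexx.
- by rewrite (IH _) ?orbT // inE zt orbT.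
Qed.

Lemma maxs_mem (s : seq R) z : z \in s -> maxs s \in s.
Proof.
case: s => [//|x t] _ /=; elim: t => [|y t IH] /=; first by rewrite inE.
rewrite maxEle; case: ifP => _; first by move: IH; rewrite !inE => /orP [->|->]; rewrite ?orbT.
by rewrite !inE eqxx orbT.
Qed.

Lemma mins_lb (s : seq R) z : z \in s -> mins s <= z.
Proof.
case: s => [//|x t] /=; elim: t z => [|y t IH] z /=.
  by rewrite inE => /eqP ->.
rewrite ge_min !inE => /or3P [/eqP ->|/eqP ->|zt].
- by rewrite (IH _) ?orbT // inE eqxx.
- by rewrite lexx.
- by rewrite (IH _) ?orbT // inE zt orbT.
Qed.

Lemma mins_mem (s : seq R) z : z \in s -> mins s \in s.
Proof.
case: s => [//|x t] _ /=; elim: t => [|y t IH] /=; first by rewrite inE.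
rewrite minEle; case: ifP => _; first by rewrite !inE eqxx orbT.
by move: IH; rewrite !inE => /orP [->|->]; rewrite ?orbT.
Qed.

Lemma maxs_le (s : seq R) z c : z \in s -> (forall y, y \in s -> y <= c) -> maxs s <= c.
Proof. by move=> zs H; apply/H/(maxs_mem zs). Qed.

Lemma mins_ge (s : seq R) z c : z \in s -> (forall y, y \in s -> c <= y) -> c <= mins s.
Proof. by move=> zs H; apply/H/(mins_mem zs). Qed.

Lemma mins_sub (s : seq R) z c : z \in s ->
  mins [seq c - y | y <- s] = c - maxs s.
Proof.
move=> zs; apply/le_anti/andP; split.
  by apply: mins_lb; apply: map_f; apply: maxs_mem zs.
have: mins [seq c - y | y <- s] \in [seq c - y | y <- s].
  by apply: (mins_mem (map_f _ zs)).
case/mapP => y ys ->; apply: lerB (lexx _) _; exact: maxs_ub.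
Qed.

Lemma maxs_sub (s : seq R) z c : z \in s ->
  maxs [seq c - y | y <- s] = c - mins s.
Proof.
move=> zs; apply/le_anti/andP; split; last first.
  by apply: maxs_ub; apply: map_f; apply: mins_mem zs.
have: maxs [seq c - y | y <- s] \in [seq c - y | y <- s].
  by apply: (maxs_mem (map_f _ zs)).
case/mapP => y ys ->; apply: lerB (lexx _) _; exact: mins_lb.
Qed.
End Lists.

Section Hat.
Variables (d : Order.disp_t) (P : finPOrderType d).
Local Notation hat := (hat P).

Definition hle (a b : hat) := (a == b) || hlt a b.

Lemma hlt_irr (a : hat) : hlt a a = false.
Proof. by case: a => [[x|]|] //=; rewrite ltxx. Qed.

Lemma hlt_trans (a b c : hat) : hlt a b -> hlt b c -> hlt a c.
Proof.
case: a => [[x|]|]; case: b => [[y|]|]; case: c => [[z|]|] //=.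
exact: lt_trans.
Qed.

Lemma hle_hlt_trans (a b c : hat) : hle a b -> hlt b c -> hlt a c.
Proof. by case/orP => [/eqP ->//|]; apply: hlt_trans. Qed.

Lemma hlt_hle_trans (a b c : hat) : hlt a b -> hle b c -> hlt a c.
Proof. by move=> H /orP [/eqP <-//|]; apply: hlt_trans. Qed.

Lemma hle_trans (a b c : hat) : hle a b -> hle b c -> hle a c.
Proof.
case/orP => [/eqP ->//|ab] /orP [/eqP <-|bc]; rewrite /hle ?ab ?orbT //.
by rewrite (hlt_trans ab bc) orbT.
Qed.

Lemma hltW (a b : hat) : hlt a b -> hle a b.
Proof. by rewrite /hle => ->; rewrite orbT. Qed.

Lemma hcoversW (a b : hat) : hcovers a b -> hlt a b.
Proof. by case/andP. Qed.

Definition btw (a b : hat) := [set z | hlt a z && hlt z b].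

Lemma cov_below (a b : hat) : hlt a b -> exists2 c, hle a c & hcovers c b.
Proof.
move: {2}#|btw a b|.+1 (ltnSn #|btw a b|) => n.
elim: n a => [//|n IH] a Hn Hab.
case Hc: [forall z : hat, ~~ (hlt a z && hlt z b)].
  by exists a; rewrite /hle ?eqxx // /hcovers Hab Hc.
move/negbT: Hc; rewrite negb_forall => /existsP [z]; rewrite negbK => /andP [az zb].
have [|c zc cb] := IH z _ zb.
  rewrite -ltnS; apply: leq_trans Hn; apply: proper_card; apply/properP; split.
    apply/subsetP => y; rewrite !inE => /andP [zy ->]; by rewrite (hlt_trans az zy).
  by exists z; rewrite !inE ?az ?zb // hlt_irr.
by exists c => //; apply: hle_trans (hltW az) zc.
Qed.

Lemma cov_above (a b : hat) : hlt a b -> exists2 c, hcovers a c & hle c b.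
Proof.
move: {2}#|btw a b|.+1 (ltnSn #|btw a b|) => n.
elim: n b => [//|n IH] b Hn Hab.
case Hc: [forall z : hat, ~~ (hlt a z && hlt z b)].
  by exists b; rewrite /hle ?eqxx // /hcovers Hab Hc.
move/negbT: Hc; rewrite negb_forall => /existsP [z]; rewrite negbK => /andP [az zb].
have [|c ac cz] := IH z _ az.
  rewrite -ltnS; apply: leq_trans Hn; apply: proper_card; apply/properP; split.
    apply/subsetP => y; rewrite !inE => /andP [-> yz]; by rewrite (hlt_trans yz zb).
  by exists z; rewrite !inE ?az ?zb // hlt_irr.
by exists c => //; apply: hle_trans cz (hltW zb).
Qed.

End Hat.

Section Main.
Variables (d : Order.disp_t) (P : finPOrderType d) (R : realFieldType) (f : P -> R).
Hypothesis Hf : in_order_polytope f.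
Local Notation hat := (hat P).

Lemma hle_helt (x y : P) : hle (helt x) (helt y) = (x <= y)%O.
Proof. by rewrite /hle le_eqVlt. Qed.

Lemma fhat_ge0 (a : hat) : 0 <= fhat f a.
Proof. by case: a => [[x|]|] //=; case: (Hf) => H _; case/andP: (H x). Qed.

Lemma fhat_le1 (a : hat) : fhat f a <= 1.
Proof. by case: a => [[x|]|] //=; case: (Hf) => H _; case/andP: (H x). Qed.

Lemma fhat_mono (a b : hat) : hle a b -> fhat f a <= fhat f b.
Proof.
case/orP => [/eqP -> //|].
case: a => [[x|]|]; case: b => [[y|]|] //=.
- by move=> /ltW; case: Hf => _; apply.
- by move=> _; apply: fhat_le1 (helt x).
- by move=> _; apply: fhat_ge0 (helt y).
Qed.

Local Notation g := (alpha2 f).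

Lemma lcov_mem (x : P) (F : hat -> R) a : hcovers a (helt x) ->
  F a \in [seq F a | a <- enum {: hat} & hcovers a (helt x)].
Proof. by move=> H; apply: map_f; rewrite mem_filter H mem_enum. Qed.

Lemma ucov_mem (x : P) (F : hat -> R) a : hcovers (helt x) a ->
  F a \in [seq F a | a <- enum {: hat} & hcovers (helt x) a].
Proof. by move=> H; apply: map_f; rewrite mem_filter H mem_enum. Qed.

Lemma g_le (x : P) a : hcovers a (helt x) -> g x <= f x - fhat f a.
Proof. by move=> H; apply: mins_lb; apply: (lcov_mem (fun a => fhat f (helt x) - fhat f a) H). Qed.

Lemma g_ge0 (x : P) : 0 <= g x.
Proof.
have [c _ cov] := cov_below (isT : hlt (hbot P) (helt x)).
apply: (mins_ge (lcov_mem (fun a => fhat f (helt x) - fhat f a) cov)).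
move=> y /mapP [a]; rewrite mem_filter => /andP [ax _] ->.
by rewrite subr_ge0; apply: fhat_mono; apply/hltW/hcoversW.
Qed.

Lemma g_lef (x : P) : g x <= f x.
Proof.
have [c _ cov] := cov_below (isT : hlt (hbot P) (helt x)).
apply: le_trans (g_le cov) _; rewrite lerBlDr lerDl; exact: fhat_ge0.
Qed.

Lemma chain_sub (C D : {set P}) : is_chain C -> D \subset C -> is_chain D.
Proof.
move=> /forall_inP HC /subsetP DC; apply/forall_inP => x xD; apply/forall_inP => y yD.
by move: (HC x (DC x xD)) => /forall_inP /(_ y (DC y yD)).
Qed.

Lemma chain_max (C : {set P}) x0 : is_chain C -> x0 \in C ->
  exists2 m, m \in C & forall x, x \in C -> (x <= m)%O.
Proof.
move=> HC x0C.
have [m mC Hm] := @arg_maxnP P x0 (fun i => i \in C) (fun i => #|[set z | (z <= i)%O]|) x0C.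
exists m => // x xC.
move: HC => /forall_inP /(_ x xC) /forall_inP /(_ m mC) /orP [//|mx].
case: (eqVneq m x) => [->//|nmx].
have mlx : (m < x)%O by rewrite lt_neqAle nmx mx.
move: (Hm x xC) => /= H; move: H; rewrite leqNgt => /negP; case.
apply: proper_card; apply/properP; split.
  by apply/subsetP => z; rewrite !inE => zm; apply: le_trans zm mx.
by exists x; rewrite !inE ?lexx // lt_geF.
Qed.

Lemma chain_sum n (C : {set P}) : (#|C| < n)%N -> is_chain C ->
  forall b : hat, (forall x, x \in C -> hle (helt x) b) -> \sum_(x in C) g x <= fhat f b.
Proof.
elim: n C => [//|n IH] C Hn HC b Hb.
case: (set_0Vmem C) => [->|[x0 x0C]]; first by rewrite big_set0 fhat_ge0.
have [m mC Hm] := chain_max HC x0C.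
rewrite (bigD1 m) //=.
set C' := C :\ m.
have -> : \sum_(i | (i \in C) && (i != m)) g i = \sum_(i in C') g i.
  by apply: eq_bigl => i; rewrite in_setD1 andbC.
have C'C : C' \subset C by apply: subsetDl.
have HC' := chain_sub HC C'C.
have [c cov Hc] : exists2 c, hcovers c (helt m) & forall x, x \in C' -> hle (helt x) c.
  case: (set_0Vmem C') => [->|[y0 y0C']].
    by have [c _ cov] := cov_below (isT : hlt (hbot P) (helt m)); exists c => // x; rewrite inE.
  have [m' m'C' Hm'] := chain_max HC' y0C'.
  have m'm : hlt (helt m') (helt m).
    move: m'C'; rewrite in_setD1 => /andP [nm m'C] /=.
    by rewrite lt_neqAle nm Hm.
  have [c mc cov] := cov_below m'm.
  exists c => // x xC'; apply: hle_trans mc; rewrite hle_helt; exact: Hm'.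
have IH' := IH C' _ HC' c Hc.
have Hcard : (#|C'| < n)%N.
  by move: Hn; rewrite (cardsD1 m C) mC.
apply: le_trans (_ : fhat f (helt m) <= _); last by apply: fhat_mono; apply: Hb.
have := g_le cov; have := IH' Hcard => /=. 
move=> h1 h2; rewrite -(subrK (fhat f c) (f m)); apply: lerD => //.
Qed.

Lemma g_chain : in_chain_polytope g.
Proof.
split.
  by move=> x; rewrite g_ge0 /=; apply: le_trans (g_lef x) _; case: Hf => H _; case/andP: (H x).
move=> C HC; apply: (@chain_sum #|C|.+1 C (ltnSn _) HC (htop P)) => x _.
exact: hltW.
Qed.


Lemma mem_short (r : seq P) : (r \in short_seqs P) = (size r <= #|P|)%N.
Proof.
apply/idP/idP.
  case/flatten_mapP => n; rewrite mem_iota add0n ltnS => nP /mapP [t _ ->].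
  by rewrite size_tuple.
move=> H; apply/flatten_mapP; exists (size r); first by rewrite mem_iota add0n ltnS.
by apply/mapP; exists (in_tuple r); rewrite ?mem_enum.
Qed.

Lemma sat_cons (x y : P) r : sat_chain_to_top x (y :: r) =
  hcovers (helt x) (helt y) && sat_chain_to_top y r.
Proof. by rewrite /sat_chain_to_top /= andbA. Qed.

Lemma sat_size (x : P) r : sat_chain_to_top x r -> (size (x :: r) <= #|P|)%N.
Proof.
case/andP => Hp _.
have Hs : sorted <%O (x :: r).
  by apply: (sub_path _ Hp) => y z /hcoversW.
have Hu := lt_sorted_uniq Hs.
by rewrite -(card_uniqP Hu); apply: max_card.
Qed.

Definition above (x : P) := [set z | (x < z)%O].

Lemma above_lt (x y : P) : (x < y)%O -> (#|above y| < #|above x|)%N.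
Proof.
move=> xy; apply: proper_card; apply/properP; split.
  by apply/subsetP => z; rewrite !inE => yz; apply: lt_trans yz.
by exists y; rewrite !inE ?xy // ltxx.
Qed.

Lemma above_ind (Q : P -> Prop) :
  (forall x, (forall y, (x < y)%O -> Q y) -> Q x) -> forall x, Q x.
Proof.
move=> H x; move: {2}#|above x|.+1 (ltnSn #|above x|) => n.
elim: n x => [//|n IH] x Hn; apply: H => y xy; apply: IH.
exact: leq_trans (above_lt xy) Hn.
Qed.

Local Notation A := (alpha3 g).
Definition Ah (b : hat) : R := if b is Some (Some y) then A y else 0.
Local Notation L x := [seq \sum_(y <- x :: r) g y | r <- short_seqs P & sat_chain_to_top x r].

Lemma L_mem (x : P) r : sat_chain_to_top x r -> \sum_(y <- x :: r) g y \in L x.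
Proof.
move=> H; apply: map_f; rewrite mem_filter H mem_short /=.
by apply: leq_trans (sat_size H).
Qed.

Lemma L_ne (x : P) : exists r, sat_chain_to_top x r.
Proof.
elim/above_ind: x => x IH.
have [c cov _] := cov_above (isT : hlt (helt x) (htop P)).
case: c cov => [[y|]|] cov; last by move: (hcoversW cov).
  have [r Hr] := IH y (hcoversW cov); exists (y :: r); by rewrite sat_cons cov.
by exists [::].
Qed.

Lemma A_rec (x : P) :
  A x = g x + maxs [seq Ah b | b <- enum {: hat} & hcovers (helt x) b].
Proof.
have [c0 cov0 _] := cov_above (isT : hlt (helt x) (htop P)).
have M0 := ucov_mem Ah cov0.
have [r0 Hr0] := L_ne x.
apply/le_anti/andP; split.
  apply: (maxs_le (L_mem Hr0)) => z /mapP [r]; rewrite mem_filter => /andP [Hr rs] ->.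
  case: r Hr rs => [|y r] Hr rs.
    rewrite big_cons big_nil lerD2l; apply: maxs_ub (ucov_mem Ah Hr).
  rewrite big_cons lerD2l; move: Hr; rewrite sat_cons => /andP [cov Hr].
  apply: le_trans (maxs_ub (ucov_mem Ah cov)); rewrite /=.
  by apply: maxs_ub; apply: L_mem.
have /mapP [b] := maxs_mem M0; rewrite mem_filter => /andP [cov _] ->.
case: b cov => [[y|]|] cov; last by move: (hcoversW cov).
  have [r1 Hr1] := L_ne y.
  have /mapP [r] := maxs_mem (L_mem Hr1); rewrite mem_filter => /andP [Hr _] Eq.
  have -> : Ah (helt y) = \sum_(z <- y :: r) g z by exact: Eq.
  have Hxr : sat_chain_to_top x (y :: r) by rewrite sat_cons cov.
  by have := maxs_ub (L_mem Hxr); rewrite big_cons.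
by have := maxs_ub (@L_mem x [::] cov); rewrite big_cons big_nil /= addr0.
Qed.

Lemma A_ge0 (x : P) : 0 <= A x.
Proof.
elim/above_ind: x => x IH; rewrite A_rec.
have [c cov _] := cov_above (isT : hlt (helt x) (htop P)).
apply: addr_ge0; first exact: g_ge0.
apply: le_trans (maxs_ub (ucov_mem Ah cov)).
case: c cov => [[y|]|] cov //=.
exact: IH (hcoversW cov).
Qed.

Lemma A_le (x : P) : A x <= 1 - f x + g x.
Proof.
elim/above_ind: x => x IH; rewrite A_rec addrC lerD2r.
have [c cov _] := cov_above (isT : hlt (helt x) (htop P)).
have /mapP [b] := maxs_mem (ucov_mem Ah cov); rewrite mem_filter => /andP [cb _] ->.
case: b cb => [[y|]|] cb; last by move: (hcoversW cb).
  apply: le_trans (IH y (hcoversW cb)) _.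
  have := g_le cb => /=; rewrite lerBrDl => h.
  have h2 := fhat_le1 (helt x).
  lra.
by have := fhat_le1 (helt x); rewrite /= => h; lra.
Qed.

Lemma A_anti (x y : P) : (x <= y)%O -> A y <= A x.
Proof.
elim/above_ind: x y => x IH y; rewrite le_eqVlt => /orP [/eqP ->//|xy].
have [c cov cy] := cov_above (xy : hlt (helt x) (helt y)).
case: c cov cy => [[z|]|] cov cy; last by move: (hcoversW cov).
  rewrite [A x]A_rec; apply: le_trans (_ : A z <= _).
    by apply: IH; [exact: (hcoversW cov) | rewrite -hle_helt].
  apply: le_trans (_ : 0 + A z <= _); first by rewrite add0r.
  apply: lerD; first exact: g_ge0.
  exact: (maxs_ub (ucov_mem Ah cov)).
by move: cy; rewrite /hle /=.
Qed.

Lemma A_rev : in_rev_order_polytope A.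
Proof.
split; last by move=> x y; apply: A_anti.
move=> x; rewrite A_ge0 /=; apply: le_trans (A_le x) _.
by have := g_lef x; have := fhat_ge0 (helt x); rewrite /= => h1 h2; lra.
Qed.

Lemma foldr_notin (s : seq P) (h : P -> R) y : y \notin s -> foldr (@toggle d P R) h s y = h y.
Proof.
elim: s => [//|z s IH] /=; rewrite in_cons negb_or => /andP [yz ys].
by rewrite /toggle (negbTE yz) IH.
Qed.

Section Rho.
Variable l : seq P.
Hypothesis Hl : linear_extension l.
Local Notation rho := (pl_rowmotion l f).

Lemma rho_step (x : P) :
  1 - rho x = g x + maxs [seq 1 - fhat rho b | b <- enum {: hat} & hcovers (helt x) b].
Proof.
case: Hl => Hu Hall Hidx.
have xl := Hall x.
move: Hu Hall Hidx; case/splitPr: xl => l1 l2 Hu Hall Hidx.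
set rh := pl_rowmotion (l1 ++ x :: l2) f.
have := Hu; rewrite cat_uniq /= negb_or => /and3P [_ /andP [xl1 _] /andP [xl2 _]].
set h := foldr (@toggle d P R) f l2.
have rh_def : forall y, y \notin l1 -> rh y = foldr (@toggle d P R) f (x :: l2) y.
  by move=> y yl1; rewrite /rh /pl_rowmotion foldr_cat foldr_notin.
have hf : forall y, y \notin l2 -> h y = f y by move=> y; apply: foldr_notin.
have below : forall y, (y < x)%O -> y \notin l2.
  move=> y yx; apply/negP => yl2; have := Hidx y x yx.
  rewrite !index_cat (negbTE xl1) /= eqxx addn0.
  case: ifP => [yl1|_]; first by move: Hu; rewrite cat_uniq => /and3P [_ /hasP []]; exists y => //; rewrite in_cons yl2 orbT.
  by rewrite ltnNge leq_addr.
have above : forall y, (x < y)%O -> rh y = h y.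
  move=> y xy.
  have yx : y != x by apply/eqP => E; move: xy; rewrite E ltxx.
  have yl1 : y \notin l1.
    apply/negP => yl1; have := Hidx x y xy.
    rewrite !index_cat (negbTE xl1) yl1 /= eqxx addn0 ltnNge.
    by rewrite ltnW // index_mem.
  by rewrite rh_def //= /toggle (negbTE yx).
have rx : rh x = toggle x h x by rewrite rh_def.
have E1 : [seq fhat h a | a <- enum {: hat} & hcovers a (helt x)] =
          [seq fhat f a | a <- enum {: hat} & hcovers a (helt x)].
  apply/eq_in_map => a; rewrite mem_filter => /andP [cov _].
  case: a cov => [[y|]|] cov //=.
  by rewrite hf // below //; apply: (hcoversW cov).
have E2 : [seq fhat h a | a <- enum {: hat} & hcovers (helt x) a] =
          [seq fhat rh a | a <- enum {: hat} & hcovers (helt x) a].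
  apply/eq_in_map => a; rewrite mem_filter => /andP [cov _].
  case: a cov => [[y|]|] cov //=.
  by rewrite above //; apply: (hcoversW cov).
have [c0 _ cov0] := cov_below (isT : hlt (hbot P) (helt x)).
have [c1 cov1 _] := cov_above (isT : hlt (helt x) (htop P)).
rewrite rx /toggle eqxx E1 E2 (hf x xl2).
rewrite /alpha2.
have -> : [seq fhat f (helt x) - fhat f a | a <- enum {: hat} & hcovers a (helt x)] =
          [seq fhat f (helt x) - y | y <- [seq fhat f a | a <- enum {: hat} & hcovers a (helt x)]].
  by rewrite -map_comp.
have -> : [seq 1 - fhat rh a | a <- enum {: hat} & hcovers (helt x) a] =
          [seq 1 - y | y <- [seq fhat rh a | a <- enum {: hat} & hcovers (helt x) a]].
  by rewrite -map_comp.
rewrite (mins_sub _ (lcov_mem (fhat f) cov0)) (maxs_sub _ (ucov_mem (fhat rh) cov1)) /=.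
lra.
Qed.

Lemma rho_eq (x : P) : rho x = 1 - A x.
Proof.
suff: 1 - rho x = A x by move=> <-; lra.
elim/above_ind: x => x IH.
rewrite rho_step A_rec; congr (_ + maxs _).
apply/eq_in_map => a; rewrite mem_filter => /andP [cov _].
case: a cov => [[y|]|] cov /=; last by move: (hcoversW cov).
  exact: IH (hcoversW cov).
by rewrite subrr.
Qed.
End Rho.

End Main.

Theorem theorem2 (d : Order.disp_t) (P : finPOrderType d) (R : realFieldType)
    (f : P -> R) :
  in_order_polytope f ->
  [/\ in_chain_polytope (alpha2 f),
      in_rev_order_polytope (alpha3 (alpha2 f)) &
      forall l : seq P, linear_extension l ->
        forall x : P, pl_rowmotion l f x = alpha1 (alpha3 (alpha2 f)) x].
Proof.
move=> Hf; split.
- exact: (@g_chain _ _ _ f Hf).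
- exact: (@A_rev _ _ _ f Hf).
- by move=> l Hl x; rewrite (@rho_eq _ _ _ f l Hl x).
Qed.
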